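(* Let $n\ge 1$ and let $m\in\{3,5,6\}$ or $m=2^k$ for some integer $k\ge 2$. Then the grid graph $P_m\times P_n$ is odd prime.
   Context: All graphs are finite and simple. A graph $G$ of order $N$ is odd prime if there is a bijection $\ell:V(G)\to\{1,3,\ldots,2N-1\}$ with $\gcd(\ell(u),\ell(v))=1$ for every edge $uv$. $P_r$ denotes the path on $r$ vertices, and the grid graph $P_m\times P_n$ is the Cartesian product of $P_m$ and $P_n$: vertices $(a,b)$ with $1\le a\le m$, $1\le b\le n$, two vertices adjacent when they agree in one coordinate and differ by $1$ in the other. *)

(* Defs.v *)
From mathcomp Require Import all_boot.
Set Implicit Arguments. Unset Strict Implicit. Unset Printing Implicit Defensive.

(* Odd prime labeling: a bijection l : V -> {1,3,...,2N-1} (N = #|V|)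
   such that gcd(l u, l v) = 1 for every edge uv. *)
Definition odd_prime (T : finType) (e : rel T) : Prop :=
  exists l : T -> nat,
    injective l /\
    (forall v, odd (l v) /\ l v < 2 * #|T|) /\
    (forall u v, e u v -> coprime (l u) (l v)).

Definition grid_adj (m n : nat) : rel ('I_m * 'I_n) :=
  fun x y =>
    ((x.1 == y.1) && ((x.2.+1 == y.2 :> nat) || (y.2.+1 == x.2 :> nat))) ||
    ((x.2 == y.2) && ((x.1.+1 == y.1 :> nat) || (y.1.+1 == x.1 :> nat))).
Arguments grid_adj : clear implicits.

(* Main.v *)
Require Import Defs.
From mathcomp Require Import all_boot.
From mathcomp Require Import zify.

Lemma cop_pow2 u j : coprime (2 * u + 1) (2 * (u + 2 ^ j) + 1).
Proof.
have -> : 2 * (u + 2 ^ j) + 1 = (2 * u + 1) + 2 ^ j.+1 by rewrite expnS; lia.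
rewrite /coprime gcdnDl -/(coprime _ _) coprimeXr //.
by rewrite coprimen2 addn1 /= mul2n odd_double.
Qed.

Lemma cop_pow2' u v : (exists j, v = u + 2 ^ j) \/ (exists j, u = v + 2 ^ j) ->
  coprime (2 * u + 1) (2 * v + 1).
Proof.
case=> -[j ->]; first exact: cop_pow2.
by rewrite coprime_sym cop_pow2.
Qed.

Section Gen.
Variables (m p : nat) (f g : nat -> nat -> nat).
Hypothesis p_gt0 : 0 < p.
Hypothesis f_lt : forall r a, r < p -> a < m -> f r a < m.
Hypothesis fK : forall r a, r < p -> a < m -> g r (f r a) = a.
Hypothesis f_in : forall r a, r < p -> a.+1 < m ->
  (exists j, f r a.+1 = f r a + 2 ^ j) \/ (exists j, f r a = f r a.+1 + 2 ^ j).
Hypothesis f_ac : forall r a, r < p -> a < m ->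
  exists j, m + f (r.+1 %% p) a = f r a + 2 ^ j.

Definition L a b := 2 * (m * b + f (b %% p) a) + 1.

Lemma grid_gen n : odd_prime (grid_adj m n).
Proof.
exists (fun x : 'I_m * 'I_n => L x.1 x.2); split; [|split].
- move=> [a b] [a' b'] /=; rewrite /L => E.
  have E2 : m * b + f (b %% p) a = m * b' + f (b' %% p) a' by lia.
  have Ha := f_lt _ _ (ltn_pmod b p_gt0) (ltn_ord a).
  have Ha' := f_lt _ _ (ltn_pmod b' p_gt0) (ltn_ord a').
  have Eb : (b : nat) = b'.
    have := congr1 (fun t => t %/ m) E2.
    have m0 : 0 < m := leq_ltn_trans (leq0n _) (ltn_ord a).
    by rewrite /= !(mulnC m) !divnMDl // !divn_small // !addn0.
  move: E2; rewrite Eb => /addnI Ef.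
  have := fK _ _ (ltn_pmod b' p_gt0) (ltn_ord a); rewrite Ef fK ?ltn_pmod //.
  by move/val_inj=> ->; congr pair; apply: val_inj.
- move=> [a b] /=; split; first by rewrite /L addn1 /= mul2n odd_double.
  rewrite card_prod !card_ord /L.
  have Ha := f_lt _ _ (ltn_pmod b p_gt0) (ltn_ord a).
  have Hb := ltn_ord b.
  have : m * b + m <= m * n by rewrite -{2}(muln1 m) -mulnDr addn1 leq_mul2l ltn_ord orbT.
  lia.
- have Hac : forall (a : 'I_m) (b : nat), coprime (L a b) (L a b.+1).
    move=> a b; rewrite /L; apply: cop_pow2'; left.
    have [j Hj] := f_ac _ _ (ltn_pmod b p_gt0) (ltn_ord a).
    exists j; rewrite -addn1 -modnDml !addn1 mulnSr.
    lia.
  have Hin : forall (a : nat) (b : nat), a.+1 < m -> coprime (L a b) (L a.+1 b).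
    move=> a b Ha; rewrite /L; apply: cop_pow2'.
    case: (f_in _ _ (ltn_pmod b p_gt0) Ha) => -[j Hj]; [left|right];
      exists j; rewrite Hj; lia.
  move=> [a b] [a' b'] /=; rewrite /grid_adj /=.
  case/orP=> /andP[/eqP E /orP[] /eqP E'].
  + subst a'; rewrite -E'; exact: Hac.
  + subst a'; rewrite coprime_sym -E'; exact: Hac.
  + subst b'; rewrite -E'; apply: Hin; rewrite E'; exact: ltn_ord.
  + subst b'; rewrite coprime_sym -E'; apply: Hin; rewrite E'; exact: ltn_ord.
Qed.
End Gen.

Definition pw2b d := has (fun j => d == 2 ^ j) (iota 0 6).

Lemma pw2bP x y : pw2b (y - x) -> exists j, y = x + 2 ^ j.
Proof.
case/hasP=> j _ /eqP E; exists j; rewrite -E subnKC //.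
by rewrite ltnW // -subn_gt0 E expn_gt0.
Qed.

Section Tab.
Variables (m : nat) (T : seq (seq nat)).
Definition tf r a := nth 0 (nth [::] T r) a.
Definition tg r x := index x (nth [::] T r).
Definition tB r a :=
  [&& tf r a < m, tg r (tf r a) == a,
      (a.+1 < m) ==> (pw2b (tf r a.+1 - tf r a) || pw2b (tf r a - tf r a.+1)) &
      pw2b (m + tf (r.+1 %% size T) a - tf r a)].

Lemma tab_ok n : 0 < size T ->
  all (fun r => all (tB r) (iota 0 m)) (iota 0 (size T)) ->
  odd_prime (grid_adj m n).
Proof.
move=> p0 /allP H.
have H' : forall r a, r < size T -> a < m -> tB r a.
  move=> r a hr ha.
  have Hr : r \in iota 0 (size T) by rewrite mem_iota.
  by move/allP: (H r Hr); apply; rewrite mem_iota.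
apply: (@grid_gen m (size T) tf tg p0).
- by move=> r a hr ha; case/and4P: (H' r a hr ha).
- by move=> r a hr ha; case/and4P: (H' r a hr ha) => _ /eqP.
- move=> r a hr ha; case/and4P: (H' r a hr (ltnW ha)) => _ _ /implyP/(_ ha).
  by case/orP=> /pw2bP; [left|right].
- by move=> r a hr ha; case/and4P: (H' r a hr ha) => _ _ _ /pw2bP.
Qed.
End Tab.

Theorem corollary3p11 (m n : nat) :
  1 <= n ->
  (m \in [:: 3; 5; 6]) \/ (exists k, 2 <= k /\ m = 2 ^ k) ->
  odd_prime (grid_adj m n).
Proof.
move=> _ [].
  rewrite !inE => /or3P[] /eqP ->.
  - by apply: (@tab_ok 3 [:: [:: 0; 1; 2]; [:: 1; 2; 0]; [:: 2; 0; 1]]).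
  - by apply: (@tab_ok 5 [:: [:: 0; 1; 3; 4; 2]; [:: 3; 4; 2; 0; 1];
       [:: 2; 0; 1; 3; 4]; [:: 1; 3; 4; 2; 0]; [:: 4; 2; 0; 1; 3]]).
  - by apply: (@tab_ok 6 [:: [:: 0; 1; 3; 2; 4; 5]; [:: 2; 3; 5; 4; 0; 1];
       [:: 4; 5; 1; 0; 2; 3]]).
case=> k [_ ->].
apply: (@grid_gen (2 ^ k) 1 (fun _ a => a) (fun _ x => x)) => //.
- by move=> r a _ _; left; exists 0; rewrite expn0 addn1.
- by move=> r a _ _; exists k; rewrite addnC.
Qed.
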